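(* There is no binary self-orthogonal $[72,7,34]$ code.
   Context: A binary linear code $C$ is self-orthogonal if $C\subseteq C^\perp$. *)

(* Defs.v *)
From HB Require Import structures.
From mathcomp Require Import all_boot all_order all_algebra.
Set Implicit Arguments. Unset Strict Implicit. Unset Printing Implicit Defensive.
Import GRing.Theory.
Local Open Scope ring_scope.

Definition bcode (n : nat) := {vspace 'rV['F_2]_n}.

Definition wt (n : nat) (u : 'rV['F_2]_n) : nat := #|[set i | u 0 i != 0]|.

Definition bdot (n : nat) (u v : 'rV['F_2]_n) : 'F_2 := \sum_i u 0 i * v 0 i.

Definition self_orthogonal (n : nat) (C : bcode n) : Prop :=
  forall u v, u \in C -> v \in C -> bdot u v = 0.

Definition min_dist (n : nat) (C : bcode n) (d : nat) : Prop :=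
  (exists2 c, c \in C & (c != 0) /\ wt c = d) /\
  (forall c, c \in C -> c != 0 -> (d <= wt c)%N).

Definition is_nkd_code (n k d : nat) (C : bcode n) : Prop :=
  \dim C = k /\ min_dist C d.

(* Main.v *)
Require Import Defs.
From mathcomp Require Import all_boot all_order all_algebra all_field.
From mathcomp Require Import zify.
Set Implicit Arguments. Unset Strict Implicit.
Import GRing.Theory.
Local Open Scope ring_scope.

Lemma F2cases (a : 'F_2) : a = 0 \/ a = 1.
Proof. by case: a => [[|[|n]]] //= H; [left|right]; apply/val_inj. Qed.

Lemma coord_id (a b : 'F_2) :
  ((a != 0%R) + ((a + b)%R != 0%R) = (b != 0%R) + 2 * ((b == 0%R) && (a != 0%R)))%N.
Proof. by move: (F2cases a) (F2cases b) => [->|->] [->|->]; vm_compute. Qed.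

Lemma coord_id2 (a b : 'F_2) :
  (((a + b)%R != 0%R) + 2 * ((a != 0%R) && (b != 0%R)) = (a != 0%R) + (b != 0%R))%N.
Proof. by move: (F2cases a) (F2cases b) => [->|->] [->|->]; vm_compute. Qed.

Lemma coord_mul (a b : 'F_2) : a * b = ((a != 0) && (b != 0))%:R.
Proof. by apply/eqP; move: (F2cases a) (F2cases b) => [->|->] [->|->]; vm_compute. Qed.

Lemma F2nat (n : nat) : (n%:R : 'F_2) = (odd n)%:R.
Proof. elim: n => // n IH; rewrite mulrS IH /=. by by apply/eqP; case: (odd n); vm_compute. Qed.

Lemma wtE n (u : 'rV['F_2]_n) : wt u = (\sum_i nat_of_bool (u 0%R i != 0%R))%N.
Proof. by rewrite /wt -sum1_card big_mkcond /=; apply: eq_bigr => i _; rewrite inE; case: (_ != _). Qed.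

Lemma cardF2 : #|'F_2| = 2%N. Proof. by rewrite card_Fp. Qed.

Definition proj m (c v : 'rV['F_2]_m) : 'rV['F_2]_m :=
  \row_i (if c 0 i == 0 then v 0 i else 0).

Lemma wt_proj m (c v : 'rV['F_2]_m) :
  (wt v + wt (v + c) = wt c + 2 * wt (proj c v))%N.
Proof.
rewrite !wtE -big_split /= big_distrr -big_split /=.
apply: eq_bigr => i _; rewrite !mxE coord_id.
by case: (c 0 i == 0).
Qed.

Definition inter m (u v : 'rV['F_2]_m) : nat :=
  (\sum_i nat_of_bool ((u 0%R i != 0%R) && (v 0%R i != 0%R)))%N.

Lemma wt_add m (u v : 'rV['F_2]_m) :
  (wt (u + v) + 2 * inter u v = wt u + wt v)%N.
Proof.
rewrite /inter !wtE big_distrr -!big_split /=.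
by apply: eq_bigr => i _; rewrite !mxE coord_id2.
Qed.

Lemma bdotE m (u v : 'rV['F_2]_m) : bdot u v = (odd (inter u v))%:R.
Proof.
rewrite -F2nat /bdot /inter natr_sum.
by apply: eq_bigr => i _; rewrite coord_mul.
Qed.

Lemma inter_id m (u : 'rV['F_2]_m) : inter u u = wt u.
Proof. by rewrite /inter wtE; apply: eq_bigr => i _; rewrite andbb. Qed.

Lemma wt0 m (u : 'rV['F_2]_m) : wt u = 0%N -> u = 0.
Proof.
move=> /eqP; rewrite /wt cards_eq0 => /eqP H; apply/rowP => i; rewrite mxE.
apply/eqP; apply/negPn; apply/negP => Hi.
by have := in_set0 i; rewrite -H inE Hi.
Qed.

Lemma addF2 (a : 'F_2) : a + a = 0.
Proof. by apply/eqP; move: (F2cases a) => [->|->]; vm_compute. Qed.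

Lemma oppF2 (a : 'F_2) : - a = a.
Proof. by apply/eqP; move: (F2cases a) => [->|->]; vm_compute. Qed.

Lemma addv_eq0 m (u v : 'rV['F_2]_m) : u + v = 0 -> u = v.
Proof.
move=> H; apply/rowP => i; apply/eqP; rewrite -subr_eq0.
have -> : u 0 i - v 0 i = u 0 i + v 0 i.
  by rewrite oppF2.
by have := congr1 (fun w : 'rV['F_2]_m => w 0 i) H; rewrite !mxE => ->.
Qed.

Lemma oppF2rV m (v : 'rV['F_2]_m) : - v = v.
Proof. by apply/rowP => i; rewrite mxE oppF2. Qed.

Lemma wt_zero m : wt (0 : 'rV['F_2]_m) = 0%N.
Proof. by rewrite wtE big1 // => i _; rewrite mxE eqxx. Qed.

Fixpoint g (k d : nat) : nat := if k is k'.+1 then (d + g k' (uphalf d))%N else 0%N.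

Lemma g_mono k : forall d d', (d <= d')%N -> (g k d <= g k d')%N.
Proof.
elim: k => [//|k IH] d d' h /=; apply: leq_add => //; apply: IH.
lia.
Qed.

Lemma proj0 m (c : 'rV['F_2]_m) : proj c 0 = 0.
Proof. by apply/rowP => i; rewrite !mxE; case: ifP. Qed.

Lemma projc m (c : 'rV['F_2]_m) : proj c c = 0.
Proof. by apply/rowP => i; rewrite !mxE; case: ifP => // /eqP. Qed.

Lemma projD m (c u v : 'rV['F_2]_m) : proj c u + proj c v = proj c (u + v).
Proof. by apply/rowP => i; rewrite !mxE; case: ifP; rewrite ?addr0. Qed.

Lemma griesmer m k : forall (S : {set 'rV['F_2]_m}) (U : {set 'I_m}) d,
  0 \in S -> (forall u v, u \in S -> v \in S -> u + v \in S) ->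
  (forall u i, u \in S -> u 0 i != 0 -> i \in U) ->
  (2 ^ k <= #|S|)%N -> (forall u, u \in S -> u != 0 -> (d <= wt u)%N) ->
  (g k d <= #|U|)%N.
Proof.
elim: k => [//|k IH] S U d h0 hadd hsupp hcard hwt /=.
have [c0 /andP[c0S c0nz]] : exists c0, (c0 \in S) && (c0 != 0).
  case: (pickP [pred c | (c \in S) && (c != 0)]) => [c0 Hc|none]; first by exists c0.
  have : S \subset [set 0].
    by apply/subsetP => x xS; rewrite inE; move: (none x) => /= /negbT; rewrite xS /= negbK.
  move/subset_leq_card; rewrite cards1 => H.
  have := leq_trans hcard H; rewrite expnS => H4; have := expn_gt0 2 k; lia.
case: (@arg_minnP _ c0 [pred c | (c \in S) && (c != 0)] (@wt m)); first by rewrite /= c0S.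
move=> c /andP[cS cnz] cmin.
set w := wt c.
set W := [set i | c 0 i != 0].
have cardW : #|W| = w by [].
have WU : W \subset U by apply/subsetP => i; rewrite inE; apply: hsupp.
have [i0 i0W] : exists i0, i0 \in W.
  case: (pickP [pred i | i \in W]) => [i0 Hi|none]; first by exists i0.
  case/negP: cnz; apply/eqP/wt0; change (#|W| = 0%N); apply/eqP; rewrite cards_eq0; apply/eqP.
  by apply/setP => i; rewrite in_set0; move: (none i) => /= ->.
have cminS : forall z, z \in S -> z != 0 -> (w <= wt z)%N.
  by move=> z zS znz; apply: (cmin z); rewrite /= zS.
set S' := [set proj c v | v in S].
have Hc : (g k (uphalf w) <= #|U :\: W|)%N.
  apply: (IH S' (U :\: W) (uphalf w)).
  - by apply/imsetP; exists 0 => //; rewrite proj0.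
  - move=> u v /imsetP[u' u'S ->] /imsetP[v' v'S ->]; apply/imsetP; exists (u' + v').
      by apply: hadd.
    by rewrite projD.
  - move=> u i /imsetP[v vS ->]; rewrite mxE; case: ifP => // ci vi.
    rewrite !inE (hsupp v i vS vi) andbT; by rewrite ci.
  - pose f := fun v : 'rV['F_2]_m => (proj c v, v 0 i0).
    have finj : {in S &, injective f}.
      move=> u v uS vS [] Hp Hi.
      have zS := hadd u v uS vS.
      have Hz0 : proj c (u + v) = 0.
        by rewrite -projD Hp; apply/rowP => i; rewrite !mxE addF2.
      case: (eqVneq (u + v) 0) => [/addv_eq0 //|znz].
      have := wt_proj c (u + v); rewrite Hz0 wt_zero muln0 addn0.
      have := cminS _ zS znz; rewrite -/w => H1 H2.
      have : wt (u + v + c) = 0%N.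
        by apply/eqP; rewrite -leqn0 -(leq_add2l (wt (u + v))) addn0 H2.
      move/wt0/addv_eq0 => Hzc.
      move: i0W; rewrite inE -Hzc mxE Hi addF2.
      by rewrite eqxx.
    have : #|f @: S| = #|S| by apply: card_in_imset.
    have : (#|f @: S| <= #|setX S' [set: 'F_2]|)%N.
      apply: subset_leq_card; apply/subsetP => x /imsetP[v vS ->].
      by rewrite in_setX in_setT andbT; apply: imset_f.
    rewrite cardsX cardsT cardF2 => H1 H2.
    move: hcard; rewrite H2 in H1; rewrite expnS => H3.
    by have := leq_trans H3 H1; rewrite [(#|S'| * 2)%N]mulnC leq_pmul2l.
  - move=> y /imsetP[v vS ->] ynz.
    have vnz : v != 0 by apply: contraNneq ynz => ->; rewrite proj0.
    have vcnz : v + c != 0.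
      by apply: contraNneq ynz => /addv_eq0 ->; rewrite projc.
    have := wt_proj c v.
    have := cminS v vS vnz.
    have := cminS (v + c) (hadd v c vS cS) vcnz.
    set b := wt (v + c); set a := wt v; set x := wt (proj c v); move=> H1 H2 H3; have e : wt c = w by []; rewrite e in H3; clearbody a b x w; lia.
rewrite cardsD (setIidPr WU) cardW in Hc.
have Hw : (d <= w)%N by apply: hwt.
have Hg : (g k (uphalf d) <= g k (uphalf w))%N by apply: g_mono; lia.
have HwU : (w <= #|U|)%N by rewrite -cardW; apply: subset_leq_card.
apply: (leq_trans (leq_add Hw Hg)); rewrite -(subnKC HwU) leq_add2l; exact: Hc.
Qed.

Lemma g6 : g 6 36 = 73%N. Proof. by []. Qed.

Theorem proposition6p10 :
  ~ exists C : bcode 72, is_nkd_code 7 34 C /\ self_orthogonal C.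
Proof.
move=> [C [[hdim [[c0 c0C [c0nz c0w]] hmin]] hso]].
have Iev : forall u v, u \in C -> v \in C -> (2 %| inter u v)%N.
  move=> u v uC vC; rewrite dvdn2; have := hso u v uC vC; rewrite bdotE.
  by case: (odd _) => //; move/eqP; vm_compute.
have wev : forall u, u \in C -> (2 %| wt u)%N.
  by move=> u uC; rewrite -inter_id; apply: Iev.
set Cs := [set v | v \in C].
set D4 := [set v : 'rV['F_2]_72 | (4 %| wt v)%N].
set S := Cs :&: D4.
have cardCs : #|Cs| = (2 ^ 7)%N.
  by rewrite cardsE (card_vspace C) hdim cardF2.
have cardS : (2 ^ 6 <= #|S|)%N.
  have H1 := cardsID D4 Cs.
  have H2 : (#|Cs :\: D4| <= #|S|)%N.
    rewrite -(card_imset _ (addIr c0)).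
    apply: subset_leq_card; apply/subsetP => x /imsetP[v].
    rewrite !inE => /andP[vnd vC] ->.
    rewrite memvD //=.
    have := wt_add v c0; have := Iev v c0 vC c0C; have := wev v vC.
    rewrite c0w; move: vnd.
    set a := wt v; set b := wt (v + c0); set i := inter v c0; lia.
  move: H1 H2; rewrite cardCs -/S. move: #|S| #|Cs :\: D4| => p q; lia.
suff : (g 6 36 <= #|[set: 'I_72]|)%N by rewrite g6 cardsT card_ord.
apply: (@griesmer 72 6 S).
- by rewrite !inE mem0v wt_zero.
- move=> u v; rewrite !inE => /andP[uC u4] /andP[vC v4].
  rewrite memvD //=.
  have := wt_add u v; have := Iev u v uC vC.
  move: u4 v4; set a := wt u; set a' := wt v; set b := wt (u + v); set i := inter u v; lia.
- by move=> u i _ _; rewrite in_setT.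
- exact: cardS.
- move=> u; rewrite !inE => /andP[uC u4] unz.
  have := hmin u uC unz; move: u4; set a := wt u; lia.
Qed.
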